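(* If $\{A\}\ \Gamma ; \Delta \vdash \mathcal{C}_1$, and $\mathcal{C}_1 \longrightarrow \mathcal{C}_2$, then there exists some $\mathcal{D}$ such that $[\![\mathcal{C}_1]\!] \longrightarrow^* \mathcal{D}$ with $\mathcal{D} \equiv [\![\mathcal{C}_2]\!]$.
   Context: $\lambda_{\text{ch}}$ is a concurrent fine-grain call-by-value $\lambda$-calculus with asynchronous channels (primitives $\mathsf{fork}$, $\mathsf{give}$, $\mathsf{take}$, $\mathsf{newCh}$; configurations built from parallel composition, name restriction $(\nu a)$, terms and buffers $a(\vec V)$), extended with products, sums, recursive functions and iso-recursive types (hence lists). $\lambda_{\text{act}}$ is the analogous actor calculus (primitives $\mathsf{spawn}$, $\mathsf{send}$, $\mathsf{receive}$, $\mathsf{self}$; configurations built from parallel composition, $(\nu a)$ and actors $\langle a, M, \vec V\rangle$ with name $a$, running term $M$, mailbox $\vec V$). $\longrightarrow$ is configuration reduction (modulo structural congruence $\equiv$: commutativity/associativity of $\parallel$, scope extrusion), $\longrightarrow^*$ its reflexive-transitive closure. $\{A\}\ \Gamma;\Delta \vdash \mathcal{C}$ is the $\lambda_{\text{ch}}$ configuration typing judgement where every channel has the same type $A$. $[\![-]\!]$ is the translation from $\lambda_{\text{ch}}$ into $\lambda_{\text{act}}$ w.r.t. channel type $A$: $[\![\mathsf{Chan}]\!] = \mathsf{ActorRef}([\![A]\!] + \mathsf{ActorRef}([\![A]\!]))$; $\mathsf{give}\,V\,W \mapsto \mathsf{send}\,(\mathsf{inl}\,[\![V]\!])\,[\![W]\!]$;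 $\mathsf{take}\,V \mapsto$ let $selfPid \Leftarrow \mathsf{self}$ in $\mathsf{send}\,(\mathsf{inr}\,selfPid)\,[\![V]\!]$; $\mathsf{receive}$; $\mathsf{fork}\,M \mapsto$ let $x \Leftarrow \mathsf{spawn}\,[\![M]\!]$ in $\mathsf{return}\,()$; $\mathsf{newCh} \mapsto \mathsf{spawn}\,(\mathit{body}\,([\,],[\,]))$, where $\mathit{body}$ is a recursive loop holding a pair (list of buffered values, list of waiting pids): on receiving $\mathsf{inl}\,v$ it appends $v$ to the values, on $\mathsf{inr}\,pid$ it appends $pid$ to the waiting pids, and then calls $\mathit{drain}$, which, if both lists are non-empty, sends the head value to the head pid and removes both. On configurations the translation is homomorphic on $\parallel$ and $\nu$; a term $M$ becomes $(\nu a)\langle a, [\![M]\!], \epsilon\rangle$ for fresh $a$; a buffer $a(\vec V)$ becomes $\langle a, \mathit{body}\,([\![\vec V]\!], [\,]), \epsilon\rangle$ with $[\![\vec V]\!]$ the term-level list of translated values. *)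

(* Defs.v *)
(* Channel / actor names: concrete nats,
   bound by nu-restriction in configurations; alpha-conversion of nu-binders is
   part of structural congruence (rule via name swapping). *)
From Stdlib Require Import List Arith Permutation.
Import ListNotations.

Definition name := nat.

Definition swap_name (a b c : name) : name :=
  if Nat.eqb c a then b else if Nat.eqb c b then a else c.

Definition fresh (l : list name) : name := S (fold_right max 0 l).

Definition upren (r : nat -> nat) : nat -> nat :=
  fun n => match n with 0 => 0 | S n => S (r n) end.

(* Chan is the (unique) channel type, carrying values of type A.      *)
Inductive ty : Type :=
| TUnit
| TArr (A B : ty)
| TProd (A B : ty)
| TSum (A B : ty)
| TMu (A : ty)       (* mu X. A, X bound as de Bruijn index 0 *)
| TVar (n : nat)
| TChan.

Fixpoint ty_ren (r : nat -> nat) (A : ty) : ty :=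
  match A with
  | TUnit => TUnit
  | TArr A B => TArr (ty_ren r A) (ty_ren r B)
  | TProd A B => TProd (ty_ren r A) (ty_ren r B)
  | TSum A B => TSum (ty_ren r A) (ty_ren r B)
  | TMu A => TMu (ty_ren (upren r) A)
  | TVar n => TVar (r n)
  | TChan => TChan
  end.

Definition ty_up (s : nat -> ty) : nat -> ty :=
  fun n => match n with 0 => TVar 0 | S n => ty_ren S (s n) end.

Fixpoint ty_subst (s : nat -> ty) (A : ty) : ty :=
  match A with
  | TUnit => TUnit
  | TArr A B => TArr (ty_subst s A) (ty_subst s B)
  | TProd A B => TProd (ty_subst s A) (ty_subst s B)
  | TSum A B => TSum (ty_subst s A) (ty_subst s B)
  | TMu A => TMu (ty_subst (ty_up s) A)
  | TVar n => s n
  | TChan => TChan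
  end.

Definition ty_unfold (A : ty) : ty :=
  ty_subst (fun n => match n with 0 => TMu A | S n => TVar n end) A.

Inductive ch_val : Type :=
| ChVar (n : nat)
| ChName (a : name)
| ChUnit
| ChLam (M : ch_comp)            (* binds x = 0 *)
| ChRec (M : ch_comp)            (* rec f(x).M : x = 0, f = 1 *)
| ChPair (V W : ch_val)
| ChInl (V : ch_val)
| ChInr (V : ch_val)
| ChRoll (V : ch_val)
with ch_comp : Type :=
| ChApp (V W : ch_val)
| ChLet (M N : ch_comp)          (* let x <= M in N ; x = 0 in N *)
| ChReturn (V : ch_val)
| ChLetPair (V : ch_val) (M : ch_comp)  (* let (x,y) = V in M ; y = 0, x = 1 *)
| ChCase (V : ch_val) (M N : ch_comp)
| ChUnroll (V : ch_val)
| ChFork (M : ch_comp)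
| ChGive (V W : ch_val)          (* give V W : send V on channel W *)
| ChTake (V : ch_val)
| ChNewCh.

Fixpoint ch_ren_val (r : nat -> nat) (V : ch_val) : ch_val :=
  match V with
  | ChVar n => ChVar (r n)
  | ChName a => ChName a
  | ChUnit => ChUnit
  | ChLam M => ChLam (ch_ren_comp (upren r) M)
  | ChRec M => ChRec (ch_ren_comp (upren (upren r)) M)
  | ChPair V W => ChPair (ch_ren_val r V) (ch_ren_val r W)
  | ChInl V => ChInl (ch_ren_val r V)
  | ChInr V => ChInr (ch_ren_val r V)
  | ChRoll V => ChRoll (ch_ren_val r V)
  end
with ch_ren_comp (r : nat -> nat) (M : ch_comp) : ch_comp :=
  match M with
  | ChApp V W => ChApp (ch_ren_val r V) (ch_ren_val r W)
  | ChLet M N => ChLet (ch_ren_comp r M) (ch_ren_comp (upren r) N)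
  | ChReturn V => ChReturn (ch_ren_val r V)
  | ChLetPair V M => ChLetPair (ch_ren_val r V) (ch_ren_comp (upren (upren r)) M)
  | ChCase V M N => ChCase (ch_ren_val r V) (ch_ren_comp (upren r) M) (ch_ren_comp (upren r) N)
  | ChUnroll V => ChUnroll (ch_ren_val r V)
  | ChFork M => ChFork (ch_ren_comp r M)
  | ChGive V W => ChGive (ch_ren_val r V) (ch_ren_val r W)
  | ChTake V => ChTake (ch_ren_val r V)
  | ChNewCh => ChNewCh
  end.

Definition ch_up (s : nat -> ch_val) : nat -> ch_val :=
  fun n => match n with 0 => ChVar 0 | S n => ch_ren_val S (s n) end.

Fixpoint ch_subst_val (s : nat -> ch_val) (V : ch_val) : ch_val :=
  match V with
  | ChVar n => s n
  | ChName a => ChName a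
  | ChUnit => ChUnit
  | ChLam M => ChLam (ch_subst_comp (ch_up s) M)
  | ChRec M => ChRec (ch_subst_comp (ch_up (ch_up s)) M)
  | ChPair V W => ChPair (ch_subst_val s V) (ch_subst_val s W)
  | ChInl V => ChInl (ch_subst_val s V)
  | ChInr V => ChInr (ch_subst_val s V)
  | ChRoll V => ChRoll (ch_subst_val s V)
  end
with ch_subst_comp (s : nat -> ch_val) (M : ch_comp) : ch_comp :=
  match M with
  | ChApp V W => ChApp (ch_subst_val s V) (ch_subst_val s W)
  | ChLet M N => ChLet (ch_subst_comp s M) (ch_subst_comp (ch_up s) N)
  | ChReturn V => ChReturn (ch_subst_val s V)
  | ChLetPair V M => ChLetPair (ch_subst_val s V) (ch_subst_comp (ch_up (ch_up s)) M)
  | ChCase V M N => ChCase (ch_subst_val s V) (ch_subst_comp (ch_up s) M) (ch_subst_comp (ch_up s) N)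
  | ChUnroll V => ChUnroll (ch_subst_val s V)
  | ChFork M => ChFork (ch_subst_comp s M)
  | ChGive V W => ChGive (ch_subst_val s V) (ch_subst_val s W)
  | ChTake V => ChTake (ch_subst_val s V)
  | ChNewCh => ChNewCh
  end.

Definition ch_scons (V : ch_val) (s : nat -> ch_val) : nat -> ch_val :=
  fun n => match n with 0 => V | S n => s n end.

Fixpoint ch_fn_val (V : ch_val) : list name :=
  match V with
  | ChVar _ | ChUnit => []
  | ChName a => [a]
  | ChLam M | ChRec M => ch_fn_comp M
  | ChPair V W => ch_fn_val V ++ ch_fn_val W
  | ChInl V | ChInr V | ChRoll V => ch_fn_val V
  end
with ch_fn_comp (M : ch_comp) : list name :=
  match M with
  | ChApp V W | ChGive V W => ch_fn_val V ++ ch_fn_val W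
  | ChLet M N => ch_fn_comp M ++ ch_fn_comp N
  | ChReturn V | ChUnroll V | ChTake V => ch_fn_val V
  | ChLetPair V M => ch_fn_val V ++ ch_fn_comp M
  | ChCase V M N => ch_fn_val V ++ ch_fn_comp M ++ ch_fn_comp N
  | ChFork M => ch_fn_comp M
  | ChNewCh => []
  end.

Fixpoint ch_swap_val (a b : name) (V : ch_val) : ch_val :=
  match V with
  | ChVar n => ChVar n
  | ChName c => ChName (swap_name a b c)
  | ChUnit => ChUnit
  | ChLam M => ChLam (ch_swap_comp a b M)
  | ChRec M => ChRec (ch_swap_comp a b M)
  | ChPair V W => ChPair (ch_swap_val a b V) (ch_swap_val a b W)
  | ChInl V => ChInl (ch_swap_val a b V)
  | ChInr V => ChInr (ch_swap_val a b V)
  | ChRoll V => ChRoll (ch_swap_val a b V)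
  end
with ch_swap_comp (a b : name) (M : ch_comp) : ch_comp :=
  match M with
  | ChApp V W => ChApp (ch_swap_val a b V) (ch_swap_val a b W)
  | ChLet M N => ChLet (ch_swap_comp a b M) (ch_swap_comp a b N)
  | ChReturn V => ChReturn (ch_swap_val a b V)
  | ChLetPair V M => ChLetPair (ch_swap_val a b V) (ch_swap_comp a b M)
  | ChCase V M N => ChCase (ch_swap_val a b V) (ch_swap_comp a b M) (ch_swap_comp a b N)
  | ChUnroll V => ChUnroll (ch_swap_val a b V)
  | ChFork M => ChFork (ch_swap_comp a b M)
  | ChGive V W => ChGive (ch_swap_val a b V) (ch_swap_val a b W)
  | ChTake V => ChTake (ch_swap_val a b V)
  | ChNewCh => ChNewCh
  end.

Inductive ch_ectx : Type :=
| ChHole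
| ChELet (E : ch_ectx) (N : ch_comp).

Fixpoint ch_plug (E : ch_ectx) (M : ch_comp) : ch_comp :=
  match E with
  | ChHole => M
  | ChELet E N => ChLet (ch_plug E M) N
  end.

Inductive ch_tbase : ch_comp -> ch_comp -> Prop :=
| chb_lam M V :
    ch_tbase (ChApp (ChLam M) V) (ch_subst_comp (ch_scons V ChVar) M)
| chb_rec M V :
    ch_tbase (ChApp (ChRec M) V)
             (ch_subst_comp (ch_scons V (ch_scons (ChRec M) ChVar)) M)
| chb_let V M :
    ch_tbase (ChLet (ChReturn V) M) (ch_subst_comp (ch_scons V ChVar) M)
| chb_pair V W M :
    ch_tbase (ChLetPair (ChPair V W) M) (ch_subst_comp (ch_scons W (ch_scons V ChVar)) M)
| chb_inl V M N :
    ch_tbase (ChCase (ChInl V) M N) (ch_subst_comp (ch_scons V ChVar) M)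
| chb_inr V M N :
    ch_tbase (ChCase (ChInr V) M N) (ch_subst_comp (ch_scons V ChVar) N)
| chb_roll V :
    ch_tbase (ChUnroll (ChRoll V)) (ChReturn V).

Inductive ch_tstep : ch_comp -> ch_comp -> Prop :=
| ch_tstep_ctx E M N : ch_tbase M N -> ch_tstep (ch_plug E M) (ch_plug E N).

Inductive ch_cfg : Type :=
| ChPar (C D : ch_cfg)
| ChNu (a : name) (C : ch_cfg)
| ChTerm (M : ch_comp)
| ChBuf (a : name) (Vs : list ch_val).

Fixpoint ch_cfg_fn (C : ch_cfg) : list name :=
  match C with
  | ChPar C D => ch_cfg_fn C ++ ch_cfg_fn D
  | ChNu a C => remove Nat.eq_dec a (ch_cfg_fn C)
  | ChTerm M => ch_fn_comp M
  | ChBuf a Vs => a :: flat_map ch_fn_val Vs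
  end.

Fixpoint ch_cfg_swap (a b : name) (C : ch_cfg) : ch_cfg :=
  match C with
  | ChPar C D => ChPar (ch_cfg_swap a b C) (ch_cfg_swap a b D)
  | ChNu c C => ChNu (swap_name a b c) (ch_cfg_swap a b C)
  | ChTerm M => ChTerm (ch_swap_comp a b M)
  | ChBuf c Vs => ChBuf (swap_name a b c) (map (ch_swap_val a b) Vs)
  end.

Inductive ch_cong : ch_cfg -> ch_cfg -> Prop :=
| chc_refl C : ch_cong C C
| chc_sym C D : ch_cong C D -> ch_cong D C
| chc_trans C D E : ch_cong C D -> ch_cong D E -> ch_cong C E
| chc_comm C D : ch_cong (ChPar C D) (ChPar D C)
| chc_assoc C D E : ch_cong (ChPar C (ChPar D E)) (ChPar (ChPar C D) E)
| chc_extr a C D : ~ In a (ch_cfg_fn C) ->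
    ch_cong (ChPar C (ChNu a D)) (ChNu a (ChPar C D))
| chc_nu_swap a b C : ch_cong (ChNu a (ChNu b C)) (ChNu b (ChNu a C))
| chc_alpha a b C : ~ In b (ch_cfg_fn C) ->
    ch_cong (ChNu a C) (ChNu b (ch_cfg_swap a b C))
| chc_par C D E : ch_cong C D -> ch_cong (ChPar C E) (ChPar D E)
| chc_nu a C D : ch_cong C D -> ch_cong (ChNu a C) (ChNu a D).

Inductive ch_step : ch_cfg -> ch_cfg -> Prop :=
| chs_give E W a Vs :
    ch_step (ChPar (ChTerm (ch_plug E (ChGive W (ChName a)))) (ChBuf a Vs))
            (ChPar (ChTerm (ch_plug E (ChReturn ChUnit))) (ChBuf a (Vs ++ [W])))
| chs_take E W a Vs :
    ch_step (ChPar (ChTerm (ch_plug E (ChTake (ChName a)))) (ChBuf a (W :: Vs)))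
            (ChPar (ChTerm (ch_plug E (ChReturn W))) (ChBuf a Vs))
| chs_fork E M :
    ch_step (ChTerm (ch_plug E (ChFork M)))
            (ChPar (ChTerm (ch_plug E (ChReturn ChUnit))) (ChTerm M))
| chs_newch E a :
    ~ In a (ch_fn_comp (ch_plug E ChNewCh)) ->
    ch_step (ChTerm (ch_plug E ChNewCh))
            (ChNu a (ChPar (ChTerm (ch_plug E (ChReturn (ChName a)))) (ChBuf a [])))
| chs_liftM M N : ch_tstep M N -> ch_step (ChTerm M) (ChTerm N)
| chs_nu a C D : ch_step C D -> ch_step (ChNu a C) (ChNu a D)
| chs_par C D E : ch_step C D -> ch_step (ChPar C E) (ChPar D E)
| chs_equiv C C' D' D :
    ch_cong C C' -> ch_step C' D' -> ch_cong D' D -> ch_step C D.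

(* typing: {A} Gamma ; Delta |- C, all channels of type Chan(A).
   Gamma of terms is split into the names in scope (all of type Chan)
   and a de Bruijn context for term variables. *)
Inductive ch_val_typed (A : ty) (Nm : list name) : list ty -> ch_val -> ty -> Prop :=
| chtv_var G n T : nth_error G n = Some T -> ch_val_typed A Nm G (ChVar n) T
| chtv_name G a : In a Nm -> ch_val_typed A Nm G (ChName a) TChan
| chtv_unit G : ch_val_typed A Nm G ChUnit TUnit
| chtv_lam G M T1 T2 :
    ch_comp_typed A Nm (T1 :: G) M T2 -> ch_val_typed A Nm G (ChLam M) (TArr T1 T2)
| chtv_rec G M T1 T2 :
    ch_comp_typed A Nm (T1 :: TArr T1 T2 :: G) M T2 ->
    ch_val_typed A Nm G (ChRec M) (TArr T1 T2)
| chtv_pair G V W T1 T2 :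
    ch_val_typed A Nm G V T1 -> ch_val_typed A Nm G W T2 ->
    ch_val_typed A Nm G (ChPair V W) (TProd T1 T2)
| chtv_inl G V T1 T2 :
    ch_val_typed A Nm G V T1 -> ch_val_typed A Nm G (ChInl V) (TSum T1 T2)
| chtv_inr G V T1 T2 :
    ch_val_typed A Nm G V T2 -> ch_val_typed A Nm G (ChInr V) (TSum T1 T2)
| chtv_roll G V T :
    ch_val_typed A Nm G V (ty_unfold T) -> ch_val_typed A Nm G (ChRoll V) (TMu T)
with ch_comp_typed (A : ty) (Nm : list name) : list ty -> ch_comp -> ty -> Prop :=
| chtc_app G V W T1 T2 :
    ch_val_typed A Nm G V (TArr T1 T2) -> ch_val_typed A Nm G W T1 ->
    ch_comp_typed A Nm G (ChApp V W) T2
| chtc_let G M N T1 T2 :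
    ch_comp_typed A Nm G M T1 -> ch_comp_typed A Nm (T1 :: G) N T2 ->
    ch_comp_typed A Nm G (ChLet M N) T2
| chtc_return G V T :
    ch_val_typed A Nm G V T -> ch_comp_typed A Nm G (ChReturn V) T
| chtc_letpair G V M T1 T2 T :
    ch_val_typed A Nm G V (TProd T1 T2) -> ch_comp_typed A Nm (T2 :: T1 :: G) M T ->
    ch_comp_typed A Nm G (ChLetPair V M) T
| chtc_case G V M N T1 T2 T :
    ch_val_typed A Nm G V (TSum T1 T2) ->
    ch_comp_typed A Nm (T1 :: G) M T -> ch_comp_typed A Nm (T2 :: G) N T ->
    ch_comp_typed A Nm G (ChCase V M N) T
| chtc_unroll G V T :
    ch_val_typed A Nm G V (TMu T) -> ch_comp_typed A Nm G (ChUnroll V) (ty_unfold T)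
| chtc_fork G M :
    ch_comp_typed A Nm G M TUnit -> ch_comp_typed A Nm G (ChFork M) TUnit
| chtc_give G V W :
    ch_val_typed A Nm G V A -> ch_val_typed A Nm G W TChan ->
    ch_comp_typed A Nm G (ChGive V W) TUnit
| chtc_take G V :
    ch_val_typed A Nm G V TChan -> ch_comp_typed A Nm G (ChTake V) A
| chtc_newch G : ch_comp_typed A Nm G ChNewCh TChan.

Inductive ch_cfg_typed (A : ty) : list name -> list name -> ch_cfg -> Prop :=
| chtg_par Gm Dl Dl1 Dl2 C1 C2 :
    ch_cfg_typed A Gm Dl1 C1 -> ch_cfg_typed A Gm Dl2 C2 ->
    NoDup (Dl1 ++ Dl2) -> Permutation Dl (Dl1 ++ Dl2) ->
    ch_cfg_typed A Gm Dl (ChPar C1 C2)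
| chtg_nu Gm Dl a C :
    ~ In a Gm -> ~ In a Dl ->
    ch_cfg_typed A (a :: Gm) (a :: Dl) C -> ch_cfg_typed A Gm Dl (ChNu a C)
| chtg_term Gm M T :
    ch_comp_typed A Gm [] M T -> ch_cfg_typed A Gm [] (ChTerm M)
| chtg_buf Gm a Vs :
    Forall (fun V => ch_val_typed A Gm [] V A) Vs ->
    ch_cfg_typed A Gm [a] (ChBuf a Vs).

(* lambda_act syntax and semantics (untyped: only the operational     *)
(* semantics is needed)                                               *)
Inductive act_val : Type :=
| ActVar (n : nat)
| ActName (a : name)
| ActUnit
| ActLam (M : act_comp)
| ActRec (M : act_comp)
| ActPair (V W : act_val)
| ActInl (V : act_val)
| ActInr (V : act_val)
| ActRoll (V : act_val)
with act_comp : Type :=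
| ActApp (V W : act_val)
| ActLet (M N : act_comp)
| ActReturn (V : act_val)
| ActLetPair (V : act_val) (M : act_comp)
| ActCase (V : act_val) (M N : act_comp)
| ActUnroll (V : act_val)
| ActSpawn (M : act_comp)
| ActSend (V W : act_val)        (* send V W : send message V to actor W *)
| ActReceive
| ActSelf.

Fixpoint act_ren_val (r : nat -> nat) (V : act_val) : act_val :=
  match V with
  | ActVar n => ActVar (r n)
  | ActName a => ActName a
  | ActUnit => ActUnit
  | ActLam M => ActLam (act_ren_comp (upren r) M)
  | ActRec M => ActRec (act_ren_comp (upren (upren r)) M)
  | ActPair V W => ActPair (act_ren_val r V) (act_ren_val r W)
  | ActInl V => ActInl (act_ren_val r V)
  | ActInr V => ActInr (act_ren_val r V)
  | ActRoll V => ActRoll (act_ren_val r V)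
  end
with act_ren_comp (r : nat -> nat) (M : act_comp) : act_comp :=
  match M with
  | ActApp V W => ActApp (act_ren_val r V) (act_ren_val r W)
  | ActLet M N => ActLet (act_ren_comp r M) (act_ren_comp (upren r) N)
  | ActReturn V => ActReturn (act_ren_val r V)
  | ActLetPair V M => ActLetPair (act_ren_val r V) (act_ren_comp (upren (upren r)) M)
  | ActCase V M N => ActCase (act_ren_val r V) (act_ren_comp (upren r) M) (act_ren_comp (upren r) N)
  | ActUnroll V => ActUnroll (act_ren_val r V)
  | ActSpawn M => ActSpawn (act_ren_comp r M)
  | ActSend V W => ActSend (act_ren_val r V) (act_ren_val r W)
  | ActReceive => ActReceive
  | ActSelf => ActSelf
  end.

Definition act_up (s : nat -> act_val) : nat -> act_val :=
  fun n => match n with 0 => ActVar 0 | S n => act_ren_val S (s n) end.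

Fixpoint act_subst_val (s : nat -> act_val) (V : act_val) : act_val :=
  match V with
  | ActVar n => s n
  | ActName a => ActName a
  | ActUnit => ActUnit
  | ActLam M => ActLam (act_subst_comp (act_up s) M)
  | ActRec M => ActRec (act_subst_comp (act_up (act_up s)) M)
  | ActPair V W => ActPair (act_subst_val s V) (act_subst_val s W)
  | ActInl V => ActInl (act_subst_val s V)
  | ActInr V => ActInr (act_subst_val s V)
  | ActRoll V => ActRoll (act_subst_val s V)
  end
with act_subst_comp (s : nat -> act_val) (M : act_comp) : act_comp :=
  match M with
  | ActApp V W => ActApp (act_subst_val s V) (act_subst_val s W)
  | ActLet M N => ActLet (act_subst_comp s M) (act_subst_comp (act_up s) N)
  | ActReturn V => ActReturn (act_subst_val s V)
  | ActLetPair V M => ActLetPair (act_subst_val s V) (act_subst_comp (act_up (act_up s)) M)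
  | ActCase V M N => ActCase (act_subst_val s V) (act_subst_comp (act_up s) M) (act_subst_comp (act_up s) N)
  | ActUnroll V => ActUnroll (act_subst_val s V)
  | ActSpawn M => ActSpawn (act_subst_comp s M)
  | ActSend V W => ActSend (act_subst_val s V) (act_subst_val s W)
  | ActReceive => ActReceive
  | ActSelf => ActSelf
  end.

Definition act_scons (V : act_val) (s : nat -> act_val) : nat -> act_val :=
  fun n => match n with 0 => V | S n => s n end.

Fixpoint act_fn_val (V : act_val) : list name :=
  match V with
  | ActVar _ | ActUnit => []
  | ActName a => [a]
  | ActLam M | ActRec M => act_fn_comp M
  | ActPair V W => act_fn_val V ++ act_fn_val W
  | ActInl V | ActInr V | ActRoll V => act_fn_val V
  end
with act_fn_comp (M : act_comp) : list name :=
  match M with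
  | ActApp V W | ActSend V W => act_fn_val V ++ act_fn_val W
  | ActLet M N => act_fn_comp M ++ act_fn_comp N
  | ActReturn V | ActUnroll V => act_fn_val V
  | ActLetPair V M => act_fn_val V ++ act_fn_comp M
  | ActCase V M N => act_fn_val V ++ act_fn_comp M ++ act_fn_comp N
  | ActSpawn M => act_fn_comp M
  | ActReceive | ActSelf => []
  end.

Fixpoint act_swap_val (a b : name) (V : act_val) : act_val :=
  match V with
  | ActVar n => ActVar n
  | ActName c => ActName (swap_name a b c)
  | ActUnit => ActUnit
  | ActLam M => ActLam (act_swap_comp a b M)
  | ActRec M => ActRec (act_swap_comp a b M)
  | ActPair V W => ActPair (act_swap_val a b V) (act_swap_val a b W)
  | ActInl V => ActInl (act_swap_val a b V)
  | ActInr V => ActInr (act_swap_val a b V)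
  | ActRoll V => ActRoll (act_swap_val a b V)
  end
with act_swap_comp (a b : name) (M : act_comp) : act_comp :=
  match M with
  | ActApp V W => ActApp (act_swap_val a b V) (act_swap_val a b W)
  | ActLet M N => ActLet (act_swap_comp a b M) (act_swap_comp a b N)
  | ActReturn V => ActReturn (act_swap_val a b V)
  | ActLetPair V M => ActLetPair (act_swap_val a b V) (act_swap_comp a b M)
  | ActCase V M N => ActCase (act_swap_val a b V) (act_swap_comp a b M) (act_swap_comp a b N)
  | ActUnroll V => ActUnroll (act_swap_val a b V)
  | ActSpawn M => ActSpawn (act_swap_comp a b M)
  | ActSend V W => ActSend (act_swap_val a b V) (act_swap_val a b W)
  | ActReceive => ActReceive
  | ActSelf => ActSelf
  end.

Inductive act_ectx : Type :=
| ActHole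
| ActELet (E : act_ectx) (N : act_comp).

Fixpoint act_plug (E : act_ectx) (M : act_comp) : act_comp :=
  match E with
  | ActHole => M
  | ActELet E N => ActLet (act_plug E M) N
  end.

Inductive act_tbase : act_comp -> act_comp -> Prop :=
| actb_lam M V :
    act_tbase (ActApp (ActLam M) V) (act_subst_comp (act_scons V ActVar) M)
| actb_rec M V :
    act_tbase (ActApp (ActRec M) V)
              (act_subst_comp (act_scons V (act_scons (ActRec M) ActVar)) M)
| actb_let V M :
    act_tbase (ActLet (ActReturn V) M) (act_subst_comp (act_scons V ActVar) M)
| actb_pair V W M :
    act_tbase (ActLetPair (ActPair V W) M) (act_subst_comp (act_scons W (act_scons V ActVar)) M)
| actb_inl V M N :
    act_tbase (ActCase (ActInl V) M N) (act_subst_comp (act_scons V ActVar) M)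
| actb_inr V M N :
    act_tbase (ActCase (ActInr V) M N) (act_subst_comp (act_scons V ActVar) N)
| actb_roll V :
    act_tbase (ActUnroll (ActRoll V)) (ActReturn V).

Inductive act_tstep : act_comp -> act_comp -> Prop :=
| act_tstep_ctx E M N : act_tbase M N -> act_tstep (act_plug E M) (act_plug E N).

(* configurations: parallel, restriction, actor <a, M, mailbox> *)
Inductive act_cfg : Type :=
| ActPar (C D : act_cfg)
| ActNu (a : name) (C : act_cfg)
| ActActor (a : name) (M : act_comp) (Vs : list act_val).

Fixpoint act_cfg_fn (C : act_cfg) : list name :=
  match C with
  | ActPar C D => act_cfg_fn C ++ act_cfg_fn D
  | ActNu a C => remove Nat.eq_dec a (act_cfg_fn C)
  | ActActor a M Vs => a :: act_fn_comp M ++ flat_map act_fn_val Vs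
  end.

Fixpoint act_cfg_swap (a b : name) (C : act_cfg) : act_cfg :=
  match C with
  | ActPar C D => ActPar (act_cfg_swap a b C) (act_cfg_swap a b D)
  | ActNu c C => ActNu (swap_name a b c) (act_cfg_swap a b C)
  | ActActor c M Vs =>
      ActActor (swap_name a b c) (act_swap_comp a b M) (map (act_swap_val a b) Vs)
  end.

Inductive act_cong : act_cfg -> act_cfg -> Prop :=
| actc_refl C : act_cong C C
| actc_sym C D : act_cong C D -> act_cong D C
| actc_trans C D E : act_cong C D -> act_cong D E -> act_cong C E
| actc_comm C D : act_cong (ActPar C D) (ActPar D C)
| actc_assoc C D E : act_cong (ActPar C (ActPar D E)) (ActPar (ActPar C D) E)
| actc_extr a C D : ~ In a (act_cfg_fn C) ->
    act_cong (ActPar C (ActNu a D)) (ActNu a (ActPar C D))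
| actc_nu_swap a b C : act_cong (ActNu a (ActNu b C)) (ActNu b (ActNu a C))
| actc_alpha a b C : ~ In b (act_cfg_fn C) ->
    act_cong (ActNu a C) (ActNu b (act_cfg_swap a b C))
| actc_par C D E : act_cong C D -> act_cong (ActPar C E) (ActPar D E)
| actc_nu a C D : act_cong C D -> act_cong (ActNu a C) (ActNu a D).

Inductive act_step : act_cfg -> act_cfg -> Prop :=
| acts_spawn a E M Vs b :
    ~ In b (act_cfg_fn (ActActor a (act_plug E (ActSpawn M)) Vs)) ->
    act_step (ActActor a (act_plug E (ActSpawn M)) Vs)
             (ActNu b (ActPar (ActActor a (act_plug E (ActReturn (ActName b))) Vs)
                              (ActActor b M [])))
| acts_send a E V b M Vs Ws :
    act_step (ActPar (ActActor a (act_plug E (ActSend V (ActName b))) Vs) (ActActor b M Ws))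
             (ActPar (ActActor a (act_plug E (ActReturn ActUnit)) Vs) (ActActor b M (Ws ++ [V])))
| acts_sendself a E V Vs :
    act_step (ActActor a (act_plug E (ActSend V (ActName a))) Vs)
             (ActActor a (act_plug E (ActReturn ActUnit)) (Vs ++ [V]))
| acts_self a E Vs :
    act_step (ActActor a (act_plug E ActSelf) Vs)
             (ActActor a (act_plug E (ActReturn (ActName a))) Vs)
| acts_receive a E W Vs :
    act_step (ActActor a (act_plug E ActReceive) (W :: Vs))
             (ActActor a (act_plug E (ActReturn W)) Vs)
| acts_liftM a M N Vs : act_tstep M N -> act_step (ActActor a M Vs) (ActActor a N Vs)
| acts_nu a C D : act_step C D -> act_step (ActNu a C) (ActNu a D)
| acts_par C D E : act_step C D -> act_step (ActPar C E) (ActPar D E)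
| acts_equiv C C' D' D :
    act_cong C C' -> act_step C' D' -> act_cong D' D -> act_step C D.

Inductive act_steps : act_cfg -> act_cfg -> Prop :=
| act_steps_refl C : act_steps C C
| act_steps_cons C D E : act_step C D -> act_steps D E -> act_steps C E.

(* term-level lists: [] = roll (inl ()), v :: vs = roll (inr (v, vs)) *)
Definition act_nil : act_val := ActRoll (ActInl ActUnit).
Definition act_cons (v vs : act_val) : act_val := ActRoll (ActInr (ActPair v vs)).
Fixpoint act_list (l : list act_val) : act_val :=
  match l with
  | [] => act_nil
  | v :: l => act_cons v (act_list l)
  end.

(* append: rec app(p). let (xs, ys) = p in
     case xs { [] -> return ys ; x :: xs' -> let r <= app (xs', ys) in return (x :: r) } *)
Definition act_append : act_val :=
  ActRec
    (ActLetPair (ActVar 0)                         (* ys=0, xs=1, p=2, app=3 *)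
      (ActLet (ActUnroll (ActVar 1))               (* z=0, ys=1, xs=2, p=3, app=4 *)
        (ActCase (ActVar 0)
          (ActReturn (ActVar 2))                   (* u, z, ys=2 *)
          (ActLetPair (ActVar 0)                   (* q=0 ; then xs'=0, x=1, q, z, ys=4, xs, p, app=7 *)
            (ActLet (ActApp (ActVar 7) (ActPair (ActVar 0) (ActVar 4)))
              (ActReturn (act_cons (ActVar 2) (ActVar 0)))))))).  (* r=0, xs', x=2 *)

(* drain = fun x. let (vals, pids) = x in
     case vals { [] -> return (vals, pids)
               ; v :: vs -> case pids { [] -> return (vals, pids)
                                      ; pid :: pids' -> send v pid; return (vs, pids') } } *)
Definition act_drain : act_val :=
  ActLam
    (ActLetPair (ActVar 0)                                (* pids=0, vals=1, x=2 *)
      (ActLet (ActUnroll (ActVar 1))                      (* z, pids=1, vals=2, x *)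
        (ActCase (ActVar 0)
          (ActReturn (ActPair (ActVar 3) (ActVar 2)))     (* u, z, pids=2, vals=3 *)
          (ActLetPair (ActVar 0)                          (* vs=0, v=1, q, z, pids=4, vals=5, x *)
            (ActLet (ActUnroll (ActVar 4))                (* z2, vs, v, q, z, pids=5, vals=6 *)
              (ActCase (ActVar 0)
                (ActReturn (ActPair (ActVar 7) (ActVar 6)))  (* u, z2, vs, v, q, z, pids=6, vals=7 *)
                (ActLetPair (ActVar 0)                    (* pids'=0, pid=1, q2, z2, vs=4, v=5 *)
                  (ActLet (ActSend (ActVar 5) (ActVar 1))
                    (ActReturn (ActPair (ActVar 5) (ActVar 1))))))))))). (* _, pids'=1, pid, q2, z2, vs=5 *)

(* body = rec g(state). let msg <= receive in let (vals, pids) = state in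
     case msg { inl v   -> let vals' <= vals ++ [v] in
                           let state' <= drain (vals', pids) in g state'
              ; inr pid -> let pids' <= pids ++ [pid] in
                           let state' <= drain (vals, pids') in g state' } *)
Definition act_body : act_val :=
  ActRec
    (ActLet ActReceive                                  (* msg=0, state=1, g=2 *)
      (ActLetPair (ActVar 1)                            (* pids=0, vals=1, msg=2, state=3, g=4 *)
        (ActCase (ActVar 2)
          (* v=0, pids=1, vals=2, msg, state, g=5 *)
          (ActLet (ActApp act_append (ActPair (ActVar 2) (act_cons (ActVar 0) act_nil)))
            (* vals'=0, v, pids=2, vals, msg, state, g=6 *)
            (ActLet (ActApp act_drain (ActPair (ActVar 0) (ActVar 2)))
              (* state'=0, ..., g=7 *)
              (ActApp (ActVar 7) (ActVar 0))))
          (* pid=0, pids=1, vals=2, msg, state, g=5 *)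
          (ActLet (ActApp act_append (ActPair (ActVar 1) (act_cons (ActVar 0) act_nil)))
            (* pids'=0, pid, pids, vals=3, msg, state, g=6 *)
            (ActLet (ActApp act_drain (ActPair (ActVar 3) (ActVar 0)))
              (ActApp (ActVar 7) (ActVar 0))))))).

Fixpoint tr_val (V : ch_val) : act_val :=
  match V with
  | ChVar n => ActVar n
  | ChName a => ActName a
  | ChUnit => ActUnit
  | ChLam M => ActLam (tr_comp M)
  | ChRec M => ActRec (tr_comp M)
  | ChPair V W => ActPair (tr_val V) (tr_val W)
  | ChInl V => ActInl (tr_val V)
  | ChInr V => ActInr (tr_val V)
  | ChRoll V => ActRoll (tr_val V)
  end
with tr_comp (M : ch_comp) : act_comp :=
  match M with
  | ChApp V W => ActApp (tr_val V) (tr_val W)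
  | ChLet M N => ActLet (tr_comp M) (tr_comp N)
  | ChReturn V => ActReturn (tr_val V)
  | ChLetPair V M => ActLetPair (tr_val V) (tr_comp M)
  | ChCase V M N => ActCase (tr_val V) (tr_comp M) (tr_comp N)
  | ChUnroll V => ActUnroll (tr_val V)
  | ChGive V W => ActSend (ActInl (tr_val V)) (tr_val W)
  | ChTake V =>
      ActLet ActSelf
        (ActLet (ActSend (ActInr (ActVar 0)) (act_ren_val S (tr_val V))) ActReceive)
  | ChFork M => ActLet (ActSpawn (tr_comp M)) (ActReturn ActUnit)
  | ChNewCh => ActSpawn (ActApp act_body (ActPair act_nil act_nil))
  end.

Fixpoint tr_cfg (C : ch_cfg) : act_cfg :=
  match C with
  | ChPar C D => ActPar (tr_cfg C) (tr_cfg D)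
  | ChNu a C => ActNu a (tr_cfg C)
  | ChTerm M =>
      let b := fresh (ch_fn_comp M) in ActNu b (ActActor b (tr_comp M) [])
  | ChBuf a Vs =>
      ActActor a (ActApp act_body (ActPair (act_list (map tr_val Vs)) act_nil)) []
  end.

(* Main.v *)
Require Import Defs.
From Stdlib Require Import List Arith Permutation Lia FunctionalExtensionality.
Import ListNotations.

Scheme act_val_ind2 := Induction for act_val Sort Prop
  with act_comp_ind2 := Induction for act_comp Sort Prop.
Combined Scheme act_mutind from act_val_ind2, act_comp_ind2.
Scheme ch_val_ind2 := Induction for ch_val Sort Prop
  with ch_comp_ind2 := Induction for ch_comp Sort Prop.
Combined Scheme ch_mutind from ch_val_ind2, ch_comp_ind2.

Ltac rw_hyps := repeat match goal with H : forall _, _ |- _ => rewrite H end.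

Lemma act_ren_ren :
  (forall V r1 r2, act_ren_val r1 (act_ren_val r2 V) = act_ren_val (fun x => r1 (r2 x)) V) /\
  (forall M r1 r2, act_ren_comp r1 (act_ren_comp r2 M) = act_ren_comp (fun x => r1 (r2 x)) M).
Proof.
  apply act_mutind; intros; cbn; rw_hyps; f_equal; try reflexivity;
  f_equal; apply functional_extensionality; intros [|[|x]]; reflexivity.
Qed.

Lemma act_up_ren s r : (fun x => act_up s (upren r x)) = act_up (fun x => s (r x)).
Proof. apply functional_extensionality; intros [|x]; reflexivity. Qed.

Lemma act_subst_ren :
  (forall V s r, act_subst_val s (act_ren_val r V) = act_subst_val (fun x => s (r x)) V) /\
  (forall M s r, act_subst_comp s (act_ren_comp r M) = act_subst_comp (fun x => s (r x)) M).
Proof.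
  apply act_mutind; intros; cbn; rw_hyps; f_equal; try reflexivity;
  rewrite ?act_up_ren; rewrite ?act_up_ren; reflexivity.
Qed.

Lemma act_ren_up r s :
  (fun x => act_ren_val (upren r) (act_up s x)) = act_up (fun x => act_ren_val r (s x)).
Proof.
  apply functional_extensionality; intros [|x]; cbn; [reflexivity|].
  rewrite !(proj1 act_ren_ren). reflexivity.
Qed.

Lemma act_ren_subst :
  (forall V s r, act_ren_val r (act_subst_val s V) = act_subst_val (fun x => act_ren_val r (s x)) V) /\
  (forall M s r, act_ren_comp r (act_subst_comp s M) = act_subst_comp (fun x => act_ren_val r (s x)) M).
Proof.
  apply act_mutind; intros; cbn; rw_hyps; f_equal; try reflexivity;
  rewrite ?act_ren_up; rewrite ?act_ren_up; reflexivity.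
Qed.

Lemma tr_ren :
  (forall V r, tr_val (ch_ren_val r V) = act_ren_val r (tr_val V)) /\
  (forall M r, tr_comp (ch_ren_comp r M) = act_ren_comp r (tr_comp M)).
Proof.
  apply ch_mutind; intros; cbn; rw_hyps; try reflexivity.
  rewrite !(proj1 act_ren_ren). reflexivity.
Qed.

Lemma tr_up s : (fun x => tr_val (ch_up s x)) = act_up (fun x => tr_val (s x)).
Proof.
  apply functional_extensionality; intros [|x]; cbn; [reflexivity|].
  apply (proj1 tr_ren).
Qed.

Lemma tr_subst :
  (forall V s, tr_val (ch_subst_val s V) = act_subst_val (fun x => tr_val (s x)) (tr_val V)) /\
  (forall M s, tr_comp (ch_subst_comp s M) = act_subst_comp (fun x => tr_val (s x)) (tr_comp M)).
Proof.
  apply ch_mutind; intros; cbn; rw_hyps; rewrite ?tr_up; rewrite ?tr_up; try reflexivity.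
  rewrite (proj1 act_subst_ren), (proj1 act_ren_subst). reflexivity.
Qed.

Lemma tr_scons V s : (fun x => tr_val (ch_scons V s x)) = act_scons (tr_val V) (fun x => tr_val (s x)).
Proof. apply functional_extensionality; intros [|x]; reflexivity. Qed.

Fixpoint tr_ectx (E : ch_ectx) : act_ectx :=
  match E with
  | ChHole => ActHole
  | ChELet E N => ActELet (tr_ectx E) (tr_comp N)
  end.

Lemma tr_plug E M : tr_comp (ch_plug E M) = act_plug (tr_ectx E) (tr_comp M).
Proof. induction E; cbn; congruence. Qed.

Lemma tr_tbase M N : ch_tbase M N -> act_tbase (tr_comp M) (tr_comp N).
Proof.
  intros H; destruct H; cbn; rewrite ?(proj2 tr_subst); rewrite ?tr_scons; rewrite ?tr_scons; cbn; constructor.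
Qed.

Lemma swap_name_invol a b x : swap_name a b (swap_name a b x) = x.
Proof.
  unfold swap_name.
  destruct (Nat.eqb_spec x a), (Nat.eqb_spec x b); subst;
  repeat (first [rewrite Nat.eqb_refl | match goal with |- context [Nat.eqb ?u ?v] => destruct (Nat.eqb_spec u v) end]); subst; try congruence; auto.
Qed.
Lemma swap_name_l a b : swap_name a b a = b.
Proof. unfold swap_name; rewrite Nat.eqb_refl; reflexivity. Qed.
Lemma swap_name_other a b x : x <> a -> x <> b -> swap_name a b x = x.
Proof. intros; unfold swap_name; destruct (Nat.eqb_spec x a), (Nat.eqb_spec x b); congruence. Qed.
Lemma swap_name_same a x : swap_name a a x = x.
Proof. unfold swap_name; destruct (Nat.eqb_spec x a); congruence. Qed.

Lemma act_swap_ren :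
  (forall V a b r, act_swap_val a b (act_ren_val r V) = act_ren_val r (act_swap_val a b V)) /\
  (forall M a b r, act_swap_comp a b (act_ren_comp r M) = act_ren_comp r (act_swap_comp a b M)).
Proof. apply act_mutind; intros; cbn; rw_hyps; reflexivity. Qed.

Lemma tr_swap :
  (forall V a b, tr_val (ch_swap_val a b V) = act_swap_val a b (tr_val V)) /\
  (forall M a b, tr_comp (ch_swap_comp a b M) = act_swap_comp a b (tr_comp M)).
Proof.
  apply ch_mutind; intros; cbn; rw_hyps; try reflexivity.
  rewrite (proj1 act_swap_ren). reflexivity.
Qed.

Lemma act_fn_ren :
  (forall V r, act_fn_val (act_ren_val r V) = act_fn_val V) /\
  (forall M r, act_fn_comp (act_ren_comp r M) = act_fn_comp M).
Proof. apply act_mutind; intros; cbn; rw_hyps; reflexivity. Qed.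

Lemma fn_tr :
  (forall V x, In x (act_fn_val (tr_val V)) -> In x (ch_fn_val V)) /\
  (forall M x, In x (act_fn_comp (tr_comp M)) -> In x (ch_fn_comp M)).
Proof.
  apply ch_mutind; intros; cbn in *; rewrite ?(proj1 act_fn_ren) in *;
  repeat rewrite in_app_iff in *; firstorder.
Qed.

Lemma act_fn_swap :
  (forall V a b, act_fn_val (act_swap_val a b V) = map (swap_name a b) (act_fn_val V)) /\
  (forall M a b, act_fn_comp (act_swap_comp a b M) = map (swap_name a b) (act_fn_comp M)).
Proof. apply act_mutind; intros; cbn; rw_hyps; rewrite ?map_app; reflexivity. Qed.

Lemma in_map_swap a b x l : In x (map (swap_name a b) l) <-> In (swap_name a b x) l.
Proof.
  rewrite in_map_iff; split.
  - intros [y [<- Hy]]; rewrite swap_name_invol; auto.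
  - intros H; exists (swap_name a b x); rewrite swap_name_invol; auto.
Qed.

Lemma act_swap_fresh :
  (forall V a b, ~ In a (act_fn_val V) -> ~ In b (act_fn_val V) -> act_swap_val a b V = V) /\
  (forall M a b, ~ In a (act_fn_comp M) -> ~ In b (act_fn_comp M) -> act_swap_comp a b M = M).
Proof.
  apply act_mutind; intros; cbn in *; rewrite ?in_app_iff in *;
  try (f_equal; solve [firstorder]).
  f_equal; apply swap_name_other; firstorder.
Qed.

Lemma act_swap_same :
  (forall V a, act_swap_val a a V = V) /\ (forall M a, act_swap_comp a a M = M).
Proof. apply act_mutind; intros; cbn; rw_hyps; rewrite ?swap_name_same; reflexivity. Qed.

Lemma act_cfg_swap_same a C : act_cfg_swap a a C = C.
Proof.
  induction C; cbn; rewrite ?swap_name_same, ?(proj2 act_swap_same); try congruence.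
  f_equal. induction Vs; cbn; rewrite ?(proj1 act_swap_same); congruence.
Qed.

Fixpoint awf_val (n : nat) (V : act_val) : Prop :=
  match V with
  | ActVar k => k < n
  | ActName _ | ActUnit => True
  | ActLam M => awf_comp (S n) M
  | ActRec M => awf_comp (S (S n)) M
  | ActPair V W => awf_val n V /\ awf_val n W
  | ActInl V | ActInr V | ActRoll V => awf_val n V
  end
with awf_comp (n : nat) (M : act_comp) : Prop :=
  match M with
  | ActApp V W | ActSend V W => awf_val n V /\ awf_val n W
  | ActLet M N => awf_comp n M /\ awf_comp (S n) N
  | ActReturn V | ActUnroll V => awf_val n V
  | ActLetPair V M => awf_val n V /\ awf_comp (S (S n)) M
  | ActCase V M N => awf_val n V /\ awf_comp (S n) M /\ awf_comp (S n) N
  | ActSpawn M => awf_comp n M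
  | ActReceive | ActSelf => True
  end.

Fixpoint cwf_val (n : nat) (V : ch_val) : Prop :=
  match V with
  | ChVar k => k < n
  | ChName _ | ChUnit => True
  | ChLam M => cwf_comp (S n) M
  | ChRec M => cwf_comp (S (S n)) M
  | ChPair V W => cwf_val n V /\ cwf_val n W
  | ChInl V | ChInr V | ChRoll V => cwf_val n V
  end
with cwf_comp (n : nat) (M : ch_comp) : Prop :=
  match M with
  | ChApp V W | ChGive V W => cwf_val n V /\ cwf_val n W
  | ChLet M N => cwf_comp n M /\ cwf_comp (S n) N
  | ChReturn V | ChUnroll V | ChTake V => cwf_val n V
  | ChLetPair V M => cwf_val n V /\ cwf_comp (S (S n)) M
  | ChCase V M N => cwf_val n V /\ cwf_comp (S n) M /\ cwf_comp (S n) N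
  | ChFork M => cwf_comp n M
  | ChNewCh => True
  end.

Lemma act_ren_wf :
  (forall V n r, awf_val n V -> (forall i, i < n -> r i = i) -> act_ren_val r V = V) /\
  (forall M n r, awf_comp n M -> (forall i, i < n -> r i = i) -> act_ren_comp r M = M).
Proof.
  apply act_mutind; intros; cbn in *; try tauto; f_equal;
  repeat match goal with H : _ /\ _ |- _ => destruct H end;
  try solve [eauto].
  all: match goal with Hr : forall i, i < _ -> ?r i = i |- _ =>
    first [ apply Hr; assumption
          | match goal with H : forall n r, _ -> _ -> _ = _ |- _ => eapply H; [eassumption|] end;
            intros [|[|i]] Hi; cbn; auto; rewrite ?Hr by lia; reflexivity ] end.
Qed.

Lemma act_ren_closed V r : awf_val 0 V -> act_ren_val r V = V.
Proof. intros H; eapply (proj1 act_ren_wf); eauto; intros; lia. Qed.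

Lemma act_subst_wf :
  (forall V n s, awf_val n V -> (forall i, i < n -> s i = ActVar i) -> act_subst_val s V = V) /\
  (forall M n s, awf_comp n M -> (forall i, i < n -> s i = ActVar i) -> act_subst_comp s M = M).
Proof.
  apply act_mutind; intros; cbn in *; try tauto; try f_equal;
  repeat match goal with H : _ /\ _ |- _ => destruct H end;
  try solve [eauto].
  all: match goal with Hr : forall i, i < _ -> ?r i = ActVar i |- _ =>
    first [ apply Hr; assumption
          | match goal with H : forall n s, _ -> _ -> _ = _ |- _ => eapply H; [eassumption|] end;
            intros [|[|i]] Hi; cbn; auto; rewrite ?Hr by lia; reflexivity ] end.
Qed.

Lemma act_subst_closed V s : awf_val 0 V -> act_subst_val s V = V.
Proof. intros H; eapply (proj1 act_subst_wf); eauto; intros; lia. Qed.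

Lemma upren_lt n m r : (forall i, i < n -> r i < m) -> forall i, i < S n -> upren r i < S m.
Proof. intros H [|i] Hi; cbn; [lia|]. specialize (H i); lia. Qed.

Lemma awf_ren :
  (forall V n m r, awf_val n V -> (forall i, i < n -> r i < m) -> awf_val m (act_ren_val r V)) /\
  (forall M n m r, awf_comp n M -> (forall i, i < n -> r i < m) -> awf_comp m (act_ren_comp r M)).
Proof.
  apply act_mutind; intros; cbn in *; auto;
  repeat match goal with H : _ /\ _ |- _ => destruct H end;
  repeat split; eauto.
  all: match goal with Hr : forall i, i < _ -> ?r i < _ |- _ =>
    first [apply Hr; assumption |
    match goal with H : forall n m r, _ -> _ -> _ |- _ => eapply H; [eassumption|] end;
    repeat apply upren_lt; exact Hr] end.
Qed.

Lemma tr_wf :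
  (forall V n, cwf_val n V -> awf_val n (tr_val V)) /\
  (forall M n, cwf_comp n M -> awf_comp n (tr_comp M)).
Proof.
  apply ch_mutind; intros; cbn in *; auto;
  repeat match goal with H : _ /\ _ |- _ => destruct H end;
  repeat split; eauto; try lia.
  eapply (proj1 awf_ren); eauto. intros; lia.
Qed.

Lemma cwf_swap :
  (forall V n a b, cwf_val n (ch_swap_val a b V) = cwf_val n V) /\
  (forall M n a b, cwf_comp n (ch_swap_comp a b M) = cwf_comp n M).
Proof. apply ch_mutind; intros; cbn; rw_hyps; reflexivity. Qed.

Scheme chv_typed_ind2 := Induction for ch_val_typed Sort Prop
  with chc_typed_ind2 := Induction for ch_comp_typed Sort Prop.
Combined Scheme ch_typed_mutind from chv_typed_ind2, chc_typed_ind2.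

Lemma typed_wf A Nm :
  (forall G V T, ch_val_typed A Nm G V T -> cwf_val (length G) V) /\
  (forall G M T, ch_comp_typed A Nm G M T -> cwf_comp (length G) M).
Proof.
  apply ch_typed_mutind; intros; cbn in *; auto.
  apply nth_error_Some; congruence.
Qed.

Fixpoint ch_closed (C : ch_cfg) : Prop :=
  match C with
  | ChPar C D => ch_closed C /\ ch_closed D
  | ChNu _ C => ch_closed C
  | ChTerm M => cwf_comp 0 M
  | ChBuf _ Vs => Forall (cwf_val 0) Vs
  end.

Lemma typed_closed A Gm Dl C : ch_cfg_typed A Gm Dl C -> ch_closed C.
Proof.
  induction 1; cbn; auto.
  - apply (proj2 (typed_wf A Gm) _ _ _ H).
  - eapply Forall_impl; [|eassumption]. intros V HV. apply (proj1 (typed_wf A Gm) _ _ _ HV).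
Qed.

Lemma ch_closed_swap a b C : ch_closed (ch_cfg_swap a b C) <-> ch_closed C.
Proof.
  induction C; cbn; rewrite ?(proj2 cwf_swap); try tauto.
  rewrite Forall_map. split; apply Forall_impl; intros V; rewrite (proj1 cwf_swap); auto.
Qed.

Lemma ch_closed_cong C D : ch_cong C D -> (ch_closed C <-> ch_closed D).
Proof.
  induction 1; cbn in *; try tauto.
  rewrite ch_closed_swap; tauto.
Qed.

Lemma fresh_spec l : ~ In (fresh l) l.
Proof.
  assert (H : forall x, In x l -> x <= fold_right max 0 l).
  { induction l; cbn; intros x Hx; [contradiction|]. destruct Hx; subst; [lia|].
    specialize (IHl x H); lia. }
  unfold fresh; intros Hin; specialize (H _ Hin); lia.
Qed.

Definition sim A B := exists D, act_steps A D /\ act_cong D B.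

Lemma steps_trans A B C : act_steps A B -> act_steps B C -> act_steps A C.
Proof. induction 1; intros; auto. econstructor; eauto. Qed.

Lemma steps_cong_l A B E : act_cong A B -> act_steps B E -> exists E', act_steps A E' /\ act_cong E' E.
Proof.
  intros H S; destruct S.
  - exists A; split; [constructor|auto].
  - exists E; split; [|constructor]. econstructor; [|eassumption].
    eapply acts_equiv; [eassumption|eassumption|constructor].
Qed.

Lemma sim_trans A B C : sim A B -> sim B C -> sim A C.
Proof.
  intros [D1 [S1 C1]] [D2 [S2 C2]].
  destruct (steps_cong_l _ _ _ C1 S2) as [E [S3 C3]].
  exists E; split; [eapply steps_trans; eauto|]. eapply actc_trans; eauto.
Qed.

Lemma sim_cong A B : act_cong A B -> sim A B.
Proof. intros; exists A; split; [constructor|auto]. Qed.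

Lemma sim_refl A : sim A A.
Proof. apply sim_cong; constructor. Qed.

Lemma sim_step A B : act_step A B -> sim A B.
Proof. intros; exists B; split; [econstructor; [eassumption|constructor]|constructor]. Qed.

Lemma sim_cong_l A A' B : act_cong A A' -> sim A' B -> sim A B.
Proof. intros; eapply sim_trans; [apply sim_cong|]; eauto. Qed.
Lemma sim_cong_r A B B' : sim A B' -> act_cong B' B -> sim A B.
Proof. intros; eapply sim_trans; [|apply sim_cong]; eauto. Qed.
Lemma sim_step_l A A' B : act_step A A' -> sim A' B -> sim A B.
Proof. intros; eapply sim_trans; [apply sim_step|]; eauto. Qed.

Lemma steps_nu a A B : act_steps A B -> act_steps (ActNu a A) (ActNu a B).
Proof. induction 1; econstructor; eauto using acts_nu. Qed.
Lemma steps_par A B C : act_steps A B -> act_steps (ActPar A C) (ActPar B C).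
Proof. induction 1; econstructor; eauto using acts_par. Qed.

Lemma sim_nu a A B : sim A B -> sim (ActNu a A) (ActNu a B).
Proof. intros [D [S H]]; exists (ActNu a D); split; [apply steps_nu|apply actc_nu]; auto. Qed.
Lemma sim_par A B C : sim A B -> sim (ActPar A C) (ActPar B C).
Proof. intros [D [S H]]; exists (ActPar D C); split; [apply steps_par|apply actc_par]; auto. Qed.
Lemma sim_par_r A B C : sim A B -> sim (ActPar C A) (ActPar C B).
Proof.
  intros H. eapply sim_cong_l; [apply actc_comm|]. eapply sim_cong_r; [|apply actc_comm].
  apply sim_par; auto.
Qed.

Lemma cong_par_r A B C : act_cong A B -> act_cong (ActPar C A) (ActPar C B).
Proof.
  intros H. eapply actc_trans; [apply actc_comm|]. eapply actc_trans; [apply actc_par; eauto|].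
  apply actc_comm.
Qed.

Lemma nu_par_out a X B : ~ In a (act_cfg_fn B) ->
  act_cong (ActNu a (ActPar X B)) (ActPar (ActNu a X) B).
Proof.
  intros H. apply actc_sym.
  eapply actc_trans; [apply actc_comm|]. eapply actc_trans; [apply actc_extr; auto|].
  apply actc_nu, actc_comm.
Qed.

Lemma nu_par_out_r a X B : ~ In a (act_cfg_fn B) ->
  act_cong (ActNu a (ActPar B X)) (ActPar B (ActNu a X)).
Proof. intros H. apply actc_sym, actc_extr; auto. Qed.

Lemma alpha' a b C : a = b \/ ~ In b (act_cfg_fn C) ->
  act_cong (ActNu a C) (ActNu b (act_cfg_swap a b C)).
Proof.
  intros [<-|H]. - rewrite act_cfg_swap_same; constructor. - apply actc_alpha; auto.
Qed.

Lemma alpha_actor b c P : ~ In b (act_fn_comp P) -> ~ In c (act_fn_comp P) ->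
  act_cong (ActNu b (ActActor b P [])) (ActNu c (ActActor c P [])).
Proof.
  intros Hb Hc. destruct (Nat.eq_dec b c) as [<-|Hne]; [constructor|].
  eapply actc_trans; [apply (actc_alpha b c)|].
  - cbn. rewrite app_nil_r. intros [E|E]; [congruence|contradiction].
  - cbn. rewrite swap_name_l, (proj2 act_swap_fresh); auto. constructor.
Qed.

Inductive tsteps : act_comp -> act_comp -> Prop :=
| tsteps_refl M : tsteps M M
| tsteps_cons M N P : act_tstep M N -> tsteps N P -> tsteps M P.

Lemma tsteps_trans A B C : tsteps A B -> tsteps B C -> tsteps A C.
Proof. induction 1; intros; auto. econstructor; eauto. Qed.

Fixpoint ectx_comp (E1 E2 : act_ectx) : act_ectx :=
  match E1 with
  | ActHole => E2
  | ActELet E N => ActELet (ectx_comp E E2) N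
  end.

Lemma plug_comp E1 E2 M : act_plug (ectx_comp E1 E2) M = act_plug E1 (act_plug E2 M).
Proof. induction E1; cbn; congruence. Qed.

Lemma tstep_plug E M N : act_tstep M N -> act_tstep (act_plug E M) (act_plug E N).
Proof. intros []. rewrite <- !plug_comp. constructor; auto. Qed.

Lemma tsteps_plug E M N : tsteps M N -> tsteps (act_plug E M) (act_plug E N).
Proof. induction 1; econstructor; eauto using tstep_plug. Qed.

Lemma tstep_let M N K : act_tstep M N -> act_tstep (ActLet M K) (ActLet N K).
Proof. apply (tstep_plug (ActELet ActHole K)). Qed.

Lemma tsteps_let M N K : tsteps M N -> tsteps (ActLet M K) (ActLet N K).
Proof. apply (tsteps_plug (ActELet ActHole K)). Qed.

Lemma tstep_base M N : act_tbase M N -> act_tstep M N.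
Proof. apply (act_tstep_ctx ActHole). Qed.

Lemma sim_tsteps a M N Vs : tsteps M N -> sim (ActActor a M Vs) (ActActor a N Vs).
Proof.
  induction 1; [apply sim_refl|]. eapply sim_step_l; [apply acts_liftM; eauto|]. auto.
Qed.

Lemma tsteps_step1 M N P : act_tstep M N -> tsteps N P -> tsteps M P.
Proof. apply tsteps_cons. Qed.

Lemma awf_list l : Forall (awf_val 0) l -> awf_val 0 (act_list l).
Proof. induction 1; cbn; auto. Qed.

Ltac solve_tstep := first [apply tstep_base; constructor | apply tstep_let; solve_tstep].

Ltac simpl_closed :=
  repeat match goal with
  | |- context [act_ren_val ?r ?V] => rewrite (act_ren_closed V r) by auto
  | |- context [act_subst_val ?s ?V] => rewrite (act_subst_closed V s) by auto
  end.

Ltac cbn_left :=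
  match goal with |- tsteps ?A ?B => let A' := eval cbn in A in change (tsteps A' B) end.

Ltac tstep1 := unfold act_append, act_drain, act_body, act_nil, act_cons in *; eapply tsteps_step1; [solve_tstep|]; cbn_left; simpl_closed.

Lemma append_spec l m : Forall (awf_val 0) l -> awf_val 0 (act_list m) ->
  tsteps (ActApp act_append (ActPair (act_list l) (act_list m))) (ActReturn (act_list (l ++ m))).
Proof.
  intros Hl Hm. induction Hl as [|x l Hx Hl IH].
  - cbn [act_list app]. do 5 tstep1. constructor.
  - assert (awf_val 0 (act_list l)) by (apply awf_list; auto).
    cbn [act_list app]. do 6 tstep1.
    eapply tsteps_trans; [apply tsteps_let; exact IH|].
    tstep1. constructor.
Qed.

Ltac run := repeat (first [apply tsteps_refl | tstep1]).

Lemma sim_tsteps_l a M N Vs B : tsteps M N -> sim (ActActor a N Vs) B -> sim (ActActor a M Vs) B.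
Proof. intros; eapply sim_trans; [apply sim_tsteps|]; eauto. Qed.

Ltac sim_cbn_left :=
  match goal with |- sim ?A ?B => let A' := eval cbn in A in change (sim A' B) end; simpl_closed.

Lemma app_snoc_cons {T} (l : list T) w : exists x r, l ++ [w] = x :: r.
Proof. destruct l; cbn; eauto. Qed.

Lemma body_give a l w : Forall (awf_val 0) l -> awf_val 0 w ->
  sim (ActActor a (ActApp act_body (ActPair (act_list l) act_nil)) [ActInl w])
      (ActActor a (ActApp act_body (ActPair (act_list (l ++ [w])) act_nil)) []).
Proof.
  intros Hl Hw. assert (HL : awf_val 0 (act_list l)) by (apply awf_list; auto).
  eapply sim_tsteps_l; [tstep1; apply tsteps_refl|].
  sim_cbn_left.
  eapply sim_step_l; [apply (acts_receive a (ActELet ActHole _))|].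
  eapply sim_tsteps_l; [do 3 tstep1; apply tsteps_refl|].
  eapply sim_tsteps_l; [eapply tsteps_trans; [apply tsteps_let; apply (append_spec l [w]); cbn; auto|]; tstep1; apply tsteps_refl|].
  assert (Hall : Forall (awf_val 0) (l ++ [w])) by (apply Forall_app; auto).
  destruct (app_snoc_cons l w) as [x [r Hxr]]. rewrite Hxr in *.
  inversion Hall; subst. assert (awf_val 0 (act_list r)) by (apply awf_list; auto).
  apply sim_tsteps. cbn [act_list]. run.
Qed.

Lemma sim_par_tsteps_l a M N Vs C B : tsteps M N ->
  sim (ActPar (ActActor a N Vs) C) B -> sim (ActPar (ActActor a M Vs) C) B.
Proof. intros; eapply sim_trans; [apply sim_par, sim_tsteps|]; eauto. Qed.

Lemma body_take a g l w M0 Ws : Forall (awf_val 0) l -> awf_val 0 w ->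
  sim (ActPar (ActActor a (ActApp act_body (ActPair (act_list (w :: l)) act_nil)) [ActInr (ActName g)])
              (ActActor g M0 Ws))
      (ActPar (ActActor a (ActApp act_body (ActPair (act_list l) act_nil)) [])
              (ActActor g M0 (Ws ++ [w]))).
Proof.
  intros Hl Hw. assert (HL : awf_val 0 (act_list l)) by (apply awf_list; auto).
  cbn [act_list].
  eapply sim_par_tsteps_l; [tstep1; apply tsteps_refl|].
  sim_cbn_left.
  eapply sim_step_l; [apply acts_par; apply (acts_receive a (ActELet ActHole _))|].
  eapply sim_par_tsteps_l; [do 3 tstep1; apply tsteps_refl|].
  eapply sim_par_tsteps_l; [eapply tsteps_trans; [apply tsteps_let; apply (append_spec [] [ActName g]); cbn; auto|]; tstep1; apply tsteps_refl|].
  eapply sim_par_tsteps_l; [repeat tstep1; apply tsteps_refl|].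
  eapply sim_step_l; [apply (acts_send a (ActELet (ActELet ActHole _) _))|].
  apply sim_par. apply sim_tsteps. run.
Qed.

Fixpoint ch_fn_ectx (E : ch_ectx) : list name :=
  match E with ChHole => [] | ChELet E N => ch_fn_ectx E ++ ch_fn_comp N end.

Lemma ch_fn_plug E M x : In x (ch_fn_comp (ch_plug E M)) <-> In x (ch_fn_ectx E) \/ In x (ch_fn_comp M).
Proof. induction E; cbn; rewrite ?in_app_iff; [tauto|]. rewrite IHE; tauto. Qed.

Lemma act_fn_list l x : In x (act_fn_val (act_list l)) <-> In x (flat_map act_fn_val l).
Proof. induction l; cbn; rewrite ?in_app_iff; [tauto|]. rewrite IHl; tauto. Qed.

Lemma fn_tr_cfg C x : In x (act_cfg_fn (tr_cfg C)) -> In x (ch_cfg_fn C).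
Proof.
  induction C; cbn -[remove]; rewrite ?in_app_iff.
  - tauto.
  - intros H; apply in_remove in H as [H1 H2]. apply in_in_remove; auto.
  - intros H; apply in_remove in H as [H2 H1]. destruct H2 as [<-|H2]; [congruence|].
    rewrite app_nil_r in H2. apply (proj2 fn_tr); auto.
  - intros [H|H]; [auto|right]. rewrite ?app_nil_r, act_fn_list in H. destruct H as [[H|[]]|[]].
    apply in_flat_map in H as [v [Hv Hx]]. apply in_map_iff in Hv as [V [<- HV]].
    apply in_flat_map. exists V; split; auto. apply (proj1 fn_tr); auto.
Qed.

Lemma act_swap_list a b l : act_swap_val a b (act_list l) = act_list (map (act_swap_val a b) l).
Proof. induction l; [reflexivity|]. change (act_list (a0 :: l)) with (act_cons a0 (act_list l)). cbn [act_swap_val map act_cons]. rewrite IHl; reflexivity. Qed.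

Lemma tr_swap_cong a b C : act_cong (act_cfg_swap a b (tr_cfg C)) (tr_cfg (ch_cfg_swap a b C)).
Proof.
  induction C; cbn.
  - eapply actc_trans; [apply actc_par; eauto|]. apply cong_par_r; auto.
  - apply actc_nu; auto.
  - rewrite (proj2 tr_swap). apply alpha_actor.
    + rewrite (proj2 act_fn_swap), in_map_swap, swap_name_invol.
      intros H; apply (proj2 fn_tr) in H; apply (fresh_spec _ H).
    + intros H; rewrite <- (proj2 tr_swap) in H; apply (proj2 fn_tr) in H; apply (fresh_spec _ H).
  - rewrite act_swap_list, !map_map.
    erewrite map_ext; [apply actc_refl|]. intros V; cbn. rewrite (proj1 tr_swap); reflexivity.
Qed.

Lemma tr_cong C D : ch_cong C D -> act_cong (tr_cfg C) (tr_cfg D).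
Proof.
  induction 1; cbn.
  - constructor.
  - apply actc_sym; auto.
  - eapply actc_trans; eauto.
  - apply actc_comm.
  - apply actc_assoc.
  - apply actc_extr. intros Hin; apply fn_tr_cfg in Hin; auto.
  - apply actc_nu_swap.
  - eapply actc_trans; [apply actc_alpha|].
    + intros Hin; apply fn_tr_cfg in Hin; eauto.
    + apply actc_nu, tr_swap_cong.
  - apply actc_par; auto.
  - apply actc_nu; auto.
Qed.

Lemma tr_closed_list Vs : Forall (cwf_val 0) Vs -> Forall (awf_val 0) (map tr_val Vs).
Proof. induction 1; cbn; constructor; auto. apply (proj1 tr_wf); auto. Qed.

Fixpoint act_fn_ectx (E : act_ectx) : list name :=
  match E with ActHole => [] | ActELet E N => act_fn_ectx E ++ act_fn_comp N end.

Lemma act_fn_plug E M x : In x (act_fn_comp (act_plug E M)) <-> In x (act_fn_ectx E) \/ In x (act_fn_comp M).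
Proof. induction E; cbn; rewrite ?in_app_iff; [tauto|]. rewrite IHE; tauto. Qed.

Lemma fn_trE E x : In x (act_fn_ectx (tr_ectx E)) -> In x (ch_fn_ectx E).
Proof.
  induction E; cbn; rewrite ?in_app_iff; [tauto|].
  intros [H|H]; [auto|right; apply (proj2 fn_tr); auto].
Qed.

Lemma act_swap_plug_fresh a b E M : ~ In a (act_fn_ectx E) -> ~ In b (act_fn_ectx E) ->
  act_swap_comp a b (act_plug E M) = act_plug E (act_swap_comp a b M).
Proof.
  induction E; cbn; rewrite ?in_app_iff; intros; auto.
  rewrite IHE by tauto. rewrite (proj2 act_swap_fresh N) by tauto. reflexivity.
Qed.

Lemma step_self_let a E K Vs :
  act_step (ActActor a (act_plug E (ActLet ActSelf K)) Vs)
           (ActActor a (act_plug E (ActLet (ActReturn (ActName a)) K)) Vs).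
Proof.
  pose proof (acts_self a (ectx_comp E (ActELet ActHole K)) Vs) as H.
  rewrite !plug_comp in H. exact H.
Qed.

Lemma step_send_let a E V b K Vs M Ws :
  act_step (ActPar (ActActor a (act_plug E (ActLet (ActSend V (ActName b)) K)) Vs) (ActActor b M Ws))
           (ActPar (ActActor a (act_plug E (ActLet (ActReturn ActUnit) K)) Vs) (ActActor b M (Ws ++ [V]))).
Proof.
  pose proof (acts_send a (ectx_comp E (ActELet ActHole K)) V b M Vs Ws) as H.
  rewrite !plug_comp in H. exact H.
Qed.

Lemma step_spawn_let a E M K Vs c :
  ~ In c (act_cfg_fn (ActActor a (act_plug E (ActLet (ActSpawn M) K)) Vs)) ->
  act_step (ActActor a (act_plug E (ActLet (ActSpawn M) K)) Vs)
           (ActNu c (ActPar (ActActor a (act_plug E (ActLet (ActReturn (ActName c)) K)) Vs)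
                            (ActActor c M []))).
Proof.
  intros Hc.
  pose proof (acts_spawn a (ectx_comp E (ActELet ActHole K)) M Vs c) as H.
  rewrite !plug_comp in H. apply H. exact Hc.
Qed.

Lemma lift_nu_par f f' P P' B B' :
  ~ In f (act_fn_comp P) -> ~ In f' (act_fn_comp P') ->
  (forall g, ~ In g (act_fn_comp P) -> ~ In g (act_fn_comp P') ->
             ~ In g (act_cfg_fn B) -> ~ In g (act_cfg_fn B') ->
             sim (ActPar (ActActor g P []) B) (ActPar (ActActor g P' []) B')) ->
  sim (ActPar (ActNu f (ActActor f P [])) B) (ActPar (ActNu f' (ActActor f' P' [])) B').
Proof.
  intros Hf Hf' H.
  set (g := fresh (act_fn_comp P ++ act_fn_comp P' ++ act_cfg_fn B ++ act_cfg_fn B')).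
  pose proof (fresh_spec (act_fn_comp P ++ act_fn_comp P' ++ act_cfg_fn B ++ act_cfg_fn B')) as Hg.
  fold g in Hg. rewrite !in_app_iff in Hg.
  eapply sim_cong_l; [apply actc_par, (alpha_actor f g); tauto|].
  eapply sim_cong_l; [apply actc_sym, nu_par_out; tauto|].
  apply (sim_cong_r _ _ (ActNu g (ActPar (ActActor g P' []) B'))).
  - apply sim_nu, H; tauto.
  - eapply actc_trans; [apply nu_par_out; tauto|]; apply actc_par, (alpha_actor g f'); tauto.
Qed.

Lemma lift_nu_actor f f' P P' :
  ~ In f (act_fn_comp P) -> ~ In f' (act_fn_comp P') ->
  (forall g, ~ In g (act_fn_comp P) -> ~ In g (act_fn_comp P') ->
             sim (ActActor g P []) (ActActor g P' [])) ->
  sim (ActNu f (ActActor f P [])) (ActNu f' (ActActor f' P' [])).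
Proof.
  intros Hf Hf' H.
  set (g := fresh (act_fn_comp P ++ act_fn_comp P')).
  pose proof (fresh_spec (act_fn_comp P ++ act_fn_comp P')) as Hg.
  fold g in Hg. rewrite !in_app_iff in Hg.
  eapply sim_cong_l; [apply (alpha_actor f g); tauto|].
  apply (sim_cong_r _ _ (ActNu g (ActActor g P' []))); [|apply (alpha_actor g f'); tauto].
  apply sim_nu, H; tauto.
Qed.

Lemma cwf_plug E M n : cwf_comp n (ch_plug E M) -> cwf_comp n M.
Proof. induction E; cbn; tauto. Qed.

Lemma fresh_tr M x : x = fresh (ch_fn_comp M) -> ~ In x (act_fn_comp (tr_comp M)).
Proof. intros -> H. apply (proj2 fn_tr) in H. apply (fresh_spec _ H). Qed.

Lemma fresh_trE E M x : x = fresh (ch_fn_comp (ch_plug E M)) -> ~ In x (act_fn_ectx (tr_ectx E)).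
Proof.
  intros -> H. apply fn_trE in H. apply (fresh_spec (ch_fn_comp (ch_plug E M))).
  apply ch_fn_plug; auto.
Qed.

Lemma case_lift E M0 N0 : ch_tbase M0 N0 ->
  sim (tr_cfg (ChTerm (ch_plug E M0))) (tr_cfg (ChTerm (ch_plug E N0))).
Proof.
  intros Hb. cbn [tr_cfg].
  apply lift_nu_actor; [apply fresh_tr; reflexivity|apply fresh_tr; reflexivity|].
  intros g _ _. apply sim_step, acts_liftM. rewrite !tr_plug.
  apply act_tstep_ctx, tr_tbase; auto.
Qed.

Lemma case_give E W a Vs : cwf_val 0 W -> Forall (cwf_val 0) Vs ->
  sim (tr_cfg (ChPar (ChTerm (ch_plug E (ChGive W (ChName a)))) (ChBuf a Vs)))
      (tr_cfg (ChPar (ChTerm (ch_plug E (ChReturn ChUnit))) (ChBuf a (Vs ++ [W])))).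
Proof.
  intros HW HVs. cbn [tr_cfg].
  apply lift_nu_par; [apply fresh_tr; reflexivity|apply fresh_tr; reflexivity|].
  intros g _ _ _ _. rewrite !tr_plug. cbn [tr_comp tr_val].
  eapply sim_step_l; [apply (acts_send g (tr_ectx E))|].
  apply sim_par_r. rewrite map_app. apply body_give.
  - apply tr_closed_list; auto.
  - apply (proj1 tr_wf); auto.
Qed.

Lemma case_take E W a Vs : cwf_val 0 W -> Forall (cwf_val 0) Vs ->
  sim (tr_cfg (ChPar (ChTerm (ch_plug E (ChTake (ChName a)))) (ChBuf a (W :: Vs))))
      (tr_cfg (ChPar (ChTerm (ch_plug E (ChReturn W))) (ChBuf a Vs))).
Proof.
  intros HW HVs. cbn [tr_cfg].
  apply lift_nu_par; [apply fresh_tr; reflexivity|apply fresh_tr; reflexivity|].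
  intros g _ _ _ _. rewrite !tr_plug. cbn [tr_comp tr_val act_ren_val map].
  eapply sim_step_l; [apply acts_par, step_self_let|].
  eapply sim_par_tsteps_l; [apply tsteps_plug; tstep1; apply tsteps_refl|].
  eapply sim_step_l; [apply step_send_let|].
  eapply sim_cong_l; [apply actc_comm|].
  eapply sim_trans; [apply body_take|].
  { apply tr_closed_list; auto. }
  { apply (proj1 tr_wf); auto. }
  eapply sim_cong_l; [apply actc_comm|].
  eapply sim_par_tsteps_l; [apply tsteps_plug; tstep1; apply tsteps_refl|].
  eapply sim_step_l; [apply acts_par, acts_receive|]. apply sim_refl.
Qed.

Lemma case_fork E M :
  sim (tr_cfg (ChTerm (ch_plug E (ChFork M))))
      (tr_cfg (ChPar (ChTerm (ch_plug E (ChReturn ChUnit))) (ChTerm M))).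
Proof.
  cbn [tr_cfg].
  set (f := fresh (ch_fn_comp (ch_plug E (ChFork M)))).
  set (f1 := fresh (ch_fn_comp (ch_plug E (ChReturn ChUnit)))).
  set (f2 := fresh (ch_fn_comp M)).
  assert (Hf1 : ~ In f1 (act_fn_comp (act_plug (tr_ectx E) (ActReturn ActUnit)))).
  { change (ActReturn ActUnit) with (tr_comp (ChReturn ChUnit)). rewrite <- tr_plug. apply fresh_tr; reflexivity. }
  assert (Hf2 : ~ In f2 (act_fn_comp (tr_comp M))) by (apply fresh_tr; reflexivity).
  assert (HfE : ~ In f (act_fn_ectx (tr_ectx E))) by (eapply fresh_trE; reflexivity).
  assert (HfM : ~ In f (act_fn_comp (tr_comp M))).
  { intros H. apply (proj2 fn_tr) in H. apply (fresh_spec (ch_fn_comp (ch_plug E (ChFork M)))).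
    apply ch_fn_plug; right; exact H. }
  rewrite !tr_plug. cbn [tr_comp tr_val].
  set (P := act_plug (tr_ectx E) (ActLet (ActSpawn (tr_comp M)) (ActReturn ActUnit))).
  set (c := fresh (act_cfg_fn (ActActor f P []))).
  pose proof (fresh_spec (act_cfg_fn (ActActor f P []))) as Hc. fold c in Hc.
  assert (Hcf : c <> f) by (intros ->; apply Hc; left; reflexivity).
  assert (HcE : ~ In c (act_fn_ectx (tr_ectx E))).
  { intros H; apply Hc; right; apply in_or_app; left; apply act_fn_plug; left; exact H. }
  assert (HcM : ~ In c (act_fn_comp (tr_comp M))).
  { intros H; apply Hc; right; apply in_or_app; left; apply act_fn_plug; right; cbn.
    rewrite in_app_iff; left; exact H. }
  eapply sim_step_l; [apply acts_nu, step_spawn_let; exact Hc|].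
  eapply sim_trans; [apply sim_nu, sim_nu, sim_par, sim_tsteps, tsteps_plug; tstep1; apply tsteps_refl|].
  apply sim_cong.
  eapply actc_trans.
  { apply actc_nu, actc_sym, actc_extr. cbn. rewrite app_nil_r.
    intros [H|H]; [congruence|]. apply act_fn_plug in H as [H|[]]. contradiction. }
  eapply actc_trans; [apply actc_nu, actc_comm|].
  eapply actc_trans.
  { apply nu_par_out_r. cbn -[remove]. rewrite app_nil_r.
    intros H; apply in_remove in H as [[H|H] _]; [congruence|contradiction]. }
  eapply actc_trans; [apply actc_comm|].
  eapply actc_trans; [apply actc_par, (alpha_actor f f1)|].
  { intros H; apply act_fn_plug in H as [H|[]]. contradiction. }
  { exact Hf1. }
  apply cong_par_r, alpha_actor; auto.
Qed.

Lemma case_newch E a : ~ In a (ch_fn_comp (ch_plug E ChNewCh)) ->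
  sim (tr_cfg (ChTerm (ch_plug E ChNewCh)))
      (tr_cfg (ChNu a (ChPar (ChTerm (ch_plug E (ChReturn (ChName a)))) (ChBuf a [])))).
Proof.
  intros Ha. cbn [tr_cfg map act_list].
  set (f := fresh (ch_fn_comp (ch_plug E ChNewCh))).
  set (f1 := fresh (ch_fn_comp (ch_plug E (ChReturn (ChName a))))).
  assert (Hf1 : ~ In f1 (act_fn_comp (act_plug (tr_ectx E) (ActReturn (ActName a))))).
  { change (ActReturn (ActName a)) with (tr_comp (ChReturn (ChName a))). rewrite <- tr_plug. apply fresh_tr; reflexivity. }
  assert (HfE : ~ In f (act_fn_ectx (tr_ectx E))) by (eapply fresh_trE; reflexivity).
  assert (HaE : ~ In a (act_fn_ectx (tr_ectx E))).
  { intros H; apply fn_trE in H; apply Ha, ch_fn_plug; left; exact H. }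
  rewrite !tr_plug. cbn [tr_comp tr_val].
  set (Q := ActApp act_body (ActPair act_nil act_nil)).
  set (P := act_plug (tr_ectx E) (ActSpawn Q)).
  set (c := fresh (act_cfg_fn (ActActor f P []))).
  pose proof (fresh_spec (act_cfg_fn (ActActor f P []))) as Hc. fold c in Hc.
  assert (Hcf : c <> f) by (intros ->; apply Hc; left; reflexivity).
  assert (HcE : ~ In c (act_fn_ectx (tr_ectx E))).
  { intros H; apply Hc; right; apply in_or_app; left; apply act_fn_plug; left; exact H. }
  eapply sim_step_l; [apply acts_nu, (acts_spawn f (tr_ectx E) Q [] c); exact Hc|].
  apply sim_cong.
  eapply actc_trans; [apply actc_nu_swap|].
  eapply actc_trans.
  { apply actc_nu, nu_par_out. cbn. intros [H|[]]; congruence. }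
  assert (HPa : act_swap_comp c a (act_plug (tr_ectx E) (ActReturn (ActName c)))
                = act_plug (tr_ectx E) (ActReturn (ActName a))).
  { rewrite act_swap_plug_fresh by auto. cbn [act_swap_comp act_swap_val].
    rewrite swap_name_l. reflexivity. }
  eapply actc_trans.
  { apply (alpha' c a). destruct (Nat.eq_dec c a) as [e|ne]; [left; exact e|right].
    cbn -[remove]. rewrite !app_nil_r, in_app_iff. intros [H|[H|[]]]; [|congruence].
    apply in_remove in H as [[H|H] Hne]; [congruence|].
    apply act_fn_plug in H as [H|[H|[]]]; [contradiction|congruence]. }
  cbn [act_cfg_swap map]. rewrite HPa, swap_name_l.
  apply actc_nu. apply actc_par. apply alpha_actor; [|exact Hf1].
  rewrite <- HPa, (proj2 act_fn_swap), in_map_swap, swap_name_invol.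
  intros H; apply act_fn_plug in H as [H|[H|[]]]; [contradiction|congruence].
Qed.

Lemma main_sim C1 C2 : ch_step C1 C2 -> ch_closed C1 -> sim (tr_cfg C1) (tr_cfg C2).
Proof.
  induction 1; cbn [ch_closed]; intros Hcl.
  - destruct Hcl as [H1 H2]. apply case_give; auto.
    apply cwf_plug in H1. cbn in H1. tauto.
  - destruct Hcl as [H1 H2]. inversion H2; subst. apply case_take; auto.
  - apply case_fork.
  - apply case_newch; auto.
  - destruct H. apply case_lift; auto.
  - apply sim_nu; auto.
  - destruct Hcl. apply sim_par; auto.
  - eapply sim_cong_l; [apply tr_cong; eauto|].
    eapply sim_cong_r; [|apply tr_cong; eauto].
    apply IHch_step. apply (ch_closed_cong _ _ H); auto.
Qed.

Theorem theorem27 (A : ty) (Gm Dl : list name) (C1 C2 : ch_cfg) :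
  ch_cfg_typed A Gm Dl C1 ->
  ch_step C1 C2 ->
  exists D, act_steps (tr_cfg C1) D /\ act_cong D (tr_cfg C2).
Proof.
  intros Ht Hs. apply (main_sim _ _ Hs). eapply typed_closed; eauto.
Qed.
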